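(* If two varieties $\mathsf V$ and $\mathsf W$ are equivalent, then for every cardinal $\kappa\le\omega$ (with $\kappa\ge 1$) the e-generalization $\kappa$-type of $\mathsf V$ equals the e-generalization $\kappa$-type of $\mathsf W$.
   Context: Two varieties $\mathsf V,\mathsf W$ (viewed as categories with algebras as objects and homomorphisms as morphisms) are equivalent if there is a categorical equivalence $\Gamma:\mathsf V\to\mathsf W$ that preserves free algebras, i.e. $\Gamma(\mathbf F_{\mathsf V}(X))=\mathbf F_{\mathsf W}(X)$ for all sets $X$. For a variety $\mathsf V$: a symbolic e-generalization problem is a finite multiset $\{t_1,\dots,t_m\}$ of terms (elements of a free algebra $\mathbf F_{\mathsf V}(X)$, $X$ finite); a solution is a term $s\in\mathbf F_{\mathsf V}(Y)$ ($Y$ the variables of $s$) such that there are substitutions (homomorphisms between free algebras) $\sigma_k$ with $\sigma_k(s)=t_k$ for all $k$; $s\preceq u$ iff $\sigma(u)=s$ for some substitution $\sigma$. In a poset a minimal complete set is a set $M$ of pairwise incomparable elements such that every element lies above some element of $M$. The type of a problem is unitary/finitary/infinitary/nullary according to whether its poset of solutions (modulo $\preceq$-equivalence) has a minimal complete set of cardinality 1 / of finite cardinality $>1$ / of infinite cardinality / has none. The e-generalization $\kappa$-type of $\mathsf V$ is the worst type (order: unitary $>$ finitary $>$ infinitary $>$ nullary) among its problems with at most $\kappa$ terms ($\kappa=\omega$: all finite problems). *)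

(* Defs.v *)
From mathcomp Require Import all_boot.
From Stdlib Require Import ClassicalEpsilon.

Set Implicit Arguments.
Unset Strict Implicit.
Unset Printing Implicit Defensive.

Record signature := Signature { op_sym : Type; arity : op_sym -> nat }.

Record algebra (S : signature) := Algebra {
  carrier :> Type;
  interp : forall o : op_sym S, ('I_(arity o) -> carrier) -> carrier }.

Inductive term (S : signature) (X : Type) : Type :=
| Var : X -> term S X
| App : forall o : op_sym S, ('I_(arity o) -> term S X) -> term S X.

Fixpoint eval (S : signature) (X : Type) (A : algebra S) (v : X -> A)
  (t : term S X) : A :=
  match t with
  | Var x => v x
  | App o ts => @interp S A o (fun i => eval v (ts i))
  end.

(* A variety: a signature together with a set of defining equations
   (by Birkhoff's theorem, equivalently an HSP-closed class). *)
Record variety := Variety {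
  vsig : signature;
  veqs : term vsig nat -> term vsig nat -> Prop }.

Definition models (V : variety) (A : algebra (vsig V)) : Prop :=
  forall l r, @veqs V l r -> forall v : nat -> A, eval v l = eval v r.

Record valg (V : variety) := VAlg {
  valg_alg :> algebra (vsig V);
  valg_models : models valg_alg }.

Record hom (S : signature) (A B : algebra S) := Hom {
  hfun :> A -> B;
  hfun_ops : forall (o : op_sym S) (args : 'I_(arity o) -> A),
      hfun (@interp S A o args) = @interp S B o (fun i => hfun (args i)) }.

Definition hom_eq (S : signature) (A B : algebra S) (f g : hom A B) : Prop :=
  forall x, f x = g x.

Definition hom_id (S : signature) (A : algebra S) : hom A A :=
  @Hom S A A (fun x => x) (fun o args => erefl).

Lemma hom_comp_ops (S : signature) (A B C : algebra S) (g : hom B C) (f : hom A B) :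
  forall (o : op_sym S) (args : 'I_(arity o) -> A),
    g (f (@interp S A o args)) = @interp S C o (fun i => g (f (args i))).
Proof. by move=> o args; rewrite (hfun_ops f) (hfun_ops g). Qed.

Definition hom_comp (S : signature) (A B C : algebra S) (g : hom B C) (f : hom A B)
  : hom A C := @Hom S A C (fun x => g (f x)) (hom_comp_ops g f).

Definition is_iso (S : signature) (A B : algebra S) : Prop :=
  exists (f : hom A B) (g : hom B A),
    (forall x, g (f x) = x) /\ (forall y, f (g y) = y).

Definition is_free (V : variety) (X : Type) (F : valg V) (eta : X -> F) : Prop :=
  forall (A : valg V) (f : X -> A),
    exists h : hom F A,
      (forall x, h (eta x) = f x) /\
      (forall h' : hom F A, (forall x, h' (eta x) = f x) -> hom_eq h' h).

Record functor (V W : variety) := Functor {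
  fobj : valg V -> valg W;
  fmap : forall A B : valg V, hom A B -> hom (fobj A) (fobj B);
  fmap_ext : forall (A B : valg V) (f g : hom A B),
      hom_eq f g -> hom_eq (fmap f) (fmap g);
  fmap_id : forall A : valg V, hom_eq (fmap (hom_id A)) (hom_id (fobj A));
  fmap_comp : forall (A B C : valg V) (f : hom A B) (g : hom B C),
      hom_eq (fmap (hom_comp g f)) (hom_comp (fmap g) (fmap f)) }.

Definition full (V W : variety) (G : functor V W) : Prop :=
  forall (A B : valg V) (h : hom (fobj G A) (fobj G B)),
    exists f : hom A B, hom_eq (fmap G f) h.

Definition faithful (V W : variety) (G : functor V W) : Prop :=
  forall (A B : valg V) (f g : hom A B),
    hom_eq (fmap G f) (fmap G g) -> hom_eq f g.

Definition ess_surj (V W : variety) (G : functor V W) : Prop :=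
  forall B : valg W, exists A : valg V, is_iso (fobj G A) B.

(* Gamma(F_V(X)) = F_W(X): the image of a free V-algebra over X is a free
   W-algebra over X (i.e. is F_W(X) up to isomorphism). *)
Definition preserves_free (V W : variety) (G : functor V W) : Prop :=
  forall (X : Type) (F : valg V) (eta : X -> F),
    is_free eta -> exists eta' : X -> fobj G F, is_free eta'.

Definition equivalent_varieties (V W : variety) : Prop :=
  exists G : functor V W, [/\ full G, faithful G, ess_surj G & preserves_free G].

(* A problem: a finite multiset (list) of terms, i.e. elements of a free
   algebra F_V(X) with X finite (X = 'I_n). *)
Record problem (V : variety) := Problem {
  pb_n : nat;
  pb_F : valg V;
  pb_eta : 'I_pb_n -> pb_F;
  pb_free : is_free pb_eta;
  pb_terms : seq pb_F }.

Record gen (V : variety) := Gen {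
  g_n : nat;
  g_F : valg V;
  g_eta : 'I_g_n -> g_F;
  g_free : is_free g_eta;
  g_s : g_F }.

Definition is_solution (V : variety) (P : problem V) (s : gen V) : Prop :=
  forall t, List.In t (pb_terms P) ->
    exists sigma : hom (g_F s) (pb_F P), sigma (g_s s) = t.

Definition gen_le (V : variety) (s u : gen V) : Prop :=
  exists sigma : hom (g_F u) (g_F s), sigma (g_s u) = g_s s.

Definition mcs (V : variety) (P : problem V) (M : gen V -> Prop) : Prop :=
  [/\ (forall s, M s -> is_solution P s),
      (forall s u, M s -> M u -> s <> u -> ~ gen_le s u /\ ~ gen_le u s)
    & (forall u, is_solution P u -> exists2 s, M s & gen_le s u)].

Definition finite_set (T : Type) (M : T -> Prop) : Prop :=
  exists l : seq T, forall x, M x -> List.In x l.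

Inductive etype := Nullary | Infinitary | Finitary | Unitary.

Definition is_unitary V (P : problem V) : Prop :=
  exists M, mcs P M /\ exists s, M s /\ forall u, M u -> u = s.
Definition is_finitary V (P : problem V) : Prop :=
  exists M, mcs P M /\ finite_set M /\ exists s u, [/\ M s, M u & s <> u].
Definition is_infinitary V (P : problem V) : Prop :=
  exists M, mcs P M /\ ~ finite_set M.

Definition problem_type V (P : problem V) : etype :=
  if excluded_middle_informative (is_unitary P) then Unitary
  else if excluded_middle_informative (is_finitary P) then Finitary
  else if excluded_middle_informative (is_infinitary P) then Infinitary
  else Nullary.

Inductive kappa := KFin of nat | KOmega.

Definition kappa_ge1 (k : kappa) : Prop :=
  match k with KFin n => 1 <= n | KOmega => True end.

Definition admissible (k : kappa) V (P : problem V) : Prop :=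
  1 <= size (pb_terms P) /\
  match k with KFin n => size (pb_terms P) <= n | KOmega => True end.

(* The worst type (nullary < infinitary < finitary < unitary) among
   problems with at most kappa terms. *)
Definition ktype (V : variety) (k : kappa) : etype :=
  let has t := exists P : problem V, admissible k P /\ problem_type P = t in
  if excluded_middle_informative (has Nullary) then Nullary
  else if excluded_middle_informative (has Infinitary) then Infinitary
  else if excluded_middle_informative (has Finitary) then Finitary
  else Unitary.

(* Main.v *)
Require Import Defs.
From mathcomp Require Import all_boot.
From Stdlib Require Import ClassicalEpsilon Classical FunctionalExtensionality PropExtensionality ProofIrrelevance.

Section FreeAlg.
Variable V : variety.
Variable X : Type.
Local Notation S := (vsig V).

Definition teq (t u : term S X) : Prop :=
  forall (A : valg V) (v : X -> A), eval v t = eval v u.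

Definition fcar := {P : term S X -> Prop | exists t, P = teq t}.
Definition cls (t : term S X) : fcar := exist _ (teq t) (ex_intro _ t erefl).
Definition rep (c : fcar) : term S X := proj1_sig (constructive_indefinite_description _ (proj2_sig c)).

Lemma rep_spec c : proj1_sig c = teq (rep c).
Proof. rewrite /rep; case: constructive_indefinite_description => //. Qed.

Lemma cls_rep c : cls (rep c) = c.
Proof.
case: c => P HP; rewrite /cls /=.
have E : teq (rep (exist _ P HP)) = P by rewrite -rep_spec.
move: (ex_intro _ _ _); rewrite E => H; f_equal; apply: proof_irrelevance.
Qed.

Lemma cls_eq t u : teq t u -> cls t = cls u.
Proof.
move=> Htu.
have E : teq t = teq u.
  apply functional_extensionality => w; apply: propositional_extensionality.
  split=> H A v; [by rewrite -(Htu A v) H | by rewrite (Htu A v) H].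
rewrite /cls; move: (ex_intro _ t _) (ex_intro _ u _); rewrite E => H1 H2.
f_equal; apply: proof_irrelevance.
Qed.

Lemma teq_rep t : teq (rep (cls t)) t.
Proof.
have E := rep_spec (cls t); rewrite /= in E.
have H : teq (rep (cls t)) (rep (cls t)) by [].
rewrite -E in H. by move=> A v; rewrite (H A v).
Qed.

Definition finterp (o : op_sym S) (args : 'I_(arity o) -> fcar) : fcar :=
  cls (@App S X o (fun i => rep (args i))).

Definition Falg : algebra S := @Algebra S fcar finterp.

Lemma cls_App o (ts : 'I_(arity o) -> term S X) :
  cls (@App S X o ts) = @interp S Falg o (fun i => cls (ts i)).
Proof.
rewrite /= /finterp; apply: cls_eq => A v /=.
f_equal; apply functional_extensionality => i.
by rewrite (teq_rep (ts i) A v).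
Qed.

Fixpoint subst (sg : nat -> term S X) (l : term S nat) : term S X :=
  match l with
  | Var n => sg n
  | App o ts => @App S X o (fun i => subst sg (ts i))
  end.

Lemma eval_subst (A : algebra S) (w : X -> A) sg l :
  eval w (subst sg l) = eval (fun n => eval w (sg n)) l.
Proof.
elim: l => [n|o ts IH] //=; f_equal; apply functional_extensionality => i; apply: IH.
Qed.

Lemma eval_F (v : nat -> Falg) l : eval v l = cls (subst (fun n => rep (v n)) l).
Proof.
elim: l => [n|o ts IH] /=; first by rewrite cls_rep.
rewrite cls_App; apply: (f_equal (@interp S Falg o)); apply functional_extensionality => i; apply: IH.
Qed.

Lemma Falg_models : models Falg.
Proof.
move=> l r Hlr v; rewrite !eval_F; apply: cls_eq => A w.
rewrite !eval_subst; exact: (valg_models Hlr).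
Qed.

Definition FV : valg V := @VAlg V Falg Falg_models.
Definition etaV (x : X) : FV := cls (@Var S X x).

Lemma FV_free : is_free etaV.
Proof.
move=> A f.
have hops : forall (o : op_sym S) (args : 'I_(arity o) -> FV),
   eval f (rep (@interp S FV o args)) = @interp S A o (fun i => eval f (rep (args i))).
  by move=> o args; rewrite /= /finterp (teq_rep _ A f).
exists (@Hom S FV A (fun c => eval f (rep c)) hops); split.
  by move=> x /=; rewrite /etaV (teq_rep _ A f).
move=> h' Hh' c /=.
have key : forall t, h' (cls t) = eval f t.
  elim=> [x|o ts IH] /=; first exact: Hh'.
  rewrite cls_App (hfun_ops h'); f_equal.
  by apply functional_extensionality => i; apply: IH.
by rewrite -{1}(cls_rep c) key.
Qed.

End FreeAlg.

Set Implicit Arguments.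
Unset Strict Implicit.

Section Abs.
Variables (T T' : Type) (le : T -> T -> Prop) (le' : T' -> T' -> Prop).
Variables (sol : T -> Prop) (sol' : T' -> Prop) (Phi : T -> T') (Psi : T' -> T).
Hypothesis refl' : forall x, le' x x.
Hypothesis trans' : forall x y z, le' x y -> le' y z -> le' x z.
Hypothesis solPhi : forall s, sol s -> sol' (Phi s).
Hypothesis solPsi : forall u, sol' u -> sol (Psi u).
Hypothesis lePhi : forall s u, le s u -> le' (Phi s) (Phi u).
Hypothesis lePhiR : forall s u, le' (Phi s) (Phi u) -> le s u.
Hypothesis PhiPsi : forall u, le' (Phi (Psi u)) u.

Definition amcs (U : Type) (leU : U -> U -> Prop) (solU : U -> Prop) (M : U -> Prop) :=
  [/\ (forall s, M s -> solU s),
      (forall s u, M s -> M u -> s <> u -> ~ leU s u /\ ~ leU u s)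
    & (forall u, solU u -> exists2 s, M s & leU s u)].

Definition img (M : T -> Prop) : T' -> Prop := fun y => exists2 s, M s & y = Phi s.

Lemma amcs_inj M s u : amcs le sol M -> M s -> M u -> Phi s = Phi u -> s = u.
Proof.
case=> _ H _ Ms Mu E; apply: NNPP => ne.
case: (H s u Ms Mu ne) => H1 _; apply: H1; apply: lePhiR; rewrite E; exact: refl'.
Qed.

Lemma amcs_img M : amcs le sol M -> amcs le' sol' (img M).
Proof.
move=> HM; case: (HM) => H1 H2 H3; split.
- by move=> y [s Ms ->]; apply: solPhi; apply: H1.
- move=> y z [s Ms ->] [u Mu ->] ne.
  have ne' : s <> u by move=> E; apply: ne; rewrite E.
  case: (H2 s u Ms Mu ne') => A B; split => H; [apply: A | apply: B]; exact: lePhiR.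
- move=> u Su; case: (H3 _ (solPsi Su)) => s Ms Hs.
  exists (Phi s); first by exists s.
  apply: trans' (PhiPsi u); exact: lePhi.
Qed.

Lemma fin_pull (M : T -> Prop) (l : seq T') :
  (forall s u, M s -> M u -> Phi s = Phi u -> s = u) ->
  (forall x, M x -> List.In (Phi x) l) -> finite_set M.
Proof.
elim: l M => [|y l IH] M Hinj Hin.
  by exists [::] => x Mx; case: (Hin x Mx).
case: (classic (exists s, M s /\ Phi s = y)) => [[s [Ms Es]]|nex].
- case: (IH (fun x => M x /\ x <> s)).
  + by move=> a b [Ma _] [Mb _]; apply: Hinj.
  + move=> x [Mx nx]; case: (Hin x Mx) => // E.
    by case: nx; apply: Hinj => //; rewrite Es E.
  move=> l' Hl'; exists (s :: l') => x Mx /=.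
  case: (classic (x = s)) => [->|nx]; [by left | right; exact: Hl'].
- apply: IH => // x Mx; case: (Hin x Mx) => // E.
  by case: nex; exists x.
Qed.

Lemma unitary_tr :
  (exists M, amcs le sol M /\ exists s, M s /\ forall u, M u -> u = s) ->
  (exists M, amcs le' sol' M /\ exists s, M s /\ forall u, M u -> u = s).
Proof using All.
move=> [M [HM [s [Ms Hs]]]]; exists (img M); split; first exact: amcs_img.
exists (Phi s); split; first by exists s.
by move=> y [u Mu ->]; rewrite (Hs u Mu).
Qed.

Lemma finitary_tr :
  (exists M, amcs le sol M /\ finite_set M /\ exists s u, [/\ M s, M u & s <> u]) ->
  (exists M, amcs le' sol' M /\ finite_set M /\ exists s u, [/\ M s, M u & s <> u]).
Proof using All.
move=> [M [HM [[l Hl] [s [u [Ms Mu ne]]]]]]; exists (img M); split; first exact: amcs_img.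
split.
  exists (map Phi l) => y [x Mx ->]; apply: List.in_map; exact: Hl.
exists (Phi s), (Phi u); split; [by exists s | by exists u |].
by move=> E; apply: ne; apply: (amcs_inj HM).
Qed.

Lemma infinitary_tr :
  (exists M, amcs le sol M /\ ~ finite_set M) ->
  (exists M, amcs le' sol' M /\ ~ finite_set M).
Proof using All.
move=> [M [HM nf]]; exists (img M); split; first exact: amcs_img.
move=> [l Hl]; apply: nf; apply: (fin_pull (l := l)).
  by move=> s u; apply: amcs_inj.
by move=> x Mx; apply: Hl; exists x.
Qed.

End Abs.

Set Implicit Arguments.
Unset Strict Implicit.

Definition relP (S : signature) (A B : algebra S) (a : A) (b : B) : Prop :=
  exists h : hom A B, h a = b.

Lemma relP_refl S (A : algebra S) (a : A) : relP a a.
Proof. by exists (hom_id A). Qed.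

Lemma relP_trans S (A B C : algebra S) (a : A) (b : B) (c : C) :
  relP a b -> relP b c -> relP a c.
Proof. by move=> [f Hf] [g Hg]; exists (hom_comp g f); rewrite /= Hf Hg. Qed.

Lemma free_uniq (V : variety) X (F : valg V) (eta : X -> F) (Hf : is_free eta)
  (A : valg V) (h1 h2 : hom F A) :
  (forall x, h1 (eta x) = h2 (eta x)) -> hom_eq h1 h2.
Proof.
move=> E; case: (Hf A (fun x => h2 (eta x))) => h [_ Hu].
move=> z; rewrite (Hu h1 E z) (Hu h2 (fun _ => erefl) z) //.
Qed.

Lemma free_iso_pt (V : variety) X (F F' : valg V) (eta : X -> F) (eta' : X -> F')
  (Hf : is_free eta) (Hf' : is_free eta') (z : F) :
  exists z' : F', relP z z' /\ relP z' z.
Proof.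
case: (Hf F' eta') => i [Hi _]; case: (Hf' F eta) => j [Hj _].
have E : hom_eq (hom_comp j i) (hom_id F).
  by apply: (free_uniq Hf) => x /=; rewrite Hi Hj.
exists (i z); split; first by exists i.
by exists j; apply: (E z).
Qed.

Section Eqv.
Variables V W : variety.
Variable G : functor V W.
Hypothesis Hfull : full G.
Hypothesis Hfaith : faithful G.
Hypothesis Hpf : preserves_free G.

Definition F1 : valg V := FV V 'I_1.
Definition x1 : 'I_1 -> F1 := @etaV V 'I_1.
Definition y1sig := constructive_indefinite_description _ (Hpf (FV_free V 'I_1)).
Definition y1 : 'I_1 -> fobj G F1 := proj1_sig y1sig.
Lemma y1_free : is_free y1.
Proof. exact: (proj2_sig y1sig). Qed.

Definition hatsig (A : valg V) (a : A) :=
  constructive_indefinite_description _ (FV_free V 'I_1 A (fun _ => a)).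
Definition hat (A : valg V) (a : A) : hom F1 A := proj1_sig (hatsig a).
Lemma hat_spec (A : valg V) (a : A) : hat a (x1 ord0) = a.
Proof. by case: (proj2_sig (hatsig a)) => H _; apply: H. Qed.
Lemma hat_uniq (A : valg V) (a : A) (h : hom F1 A) : h (x1 ord0) = a -> hom_eq h (hat a).
Proof.
move=> E; case: (proj2_sig (hatsig a)) => _ H; apply: H => i.
by rewrite (ord1 i).
Qed.

Definition e (A : valg V) (a : A) : fobj G A := fmap G (hat a) (y1 ord0).

Lemma e_rel (A B : valg V) (a : A) (b : B) : relP a b <-> relP (e a) (e b).
Proof.
split.
- move=> [h Hh]; exists (fmap G h); rewrite /e.
  rewrite -[fmap G h _]/(hom_comp (fmap G h) (fmap G (hat a)) (y1 ord0)).
  rewrite -(fmap_comp (hat a) h (y1 ord0)).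
  apply: fmap_ext => z; apply: (hat_uniq (h := hom_comp h (hat a))).
  by rewrite /= hat_spec.
- move=> [tau Ht]; case: (Hfull tau) => f Hf.
  have E : hom_eq (fmap G (hom_comp f (hat a))) (fmap G (hat b)).
    apply: (free_uniq y1_free) => i; rewrite (ord1 i).
    rewrite (fmap_comp (hat a) f (y1 ord0)) /= Hf; exact: Ht.
  exists f; have := Hfaith E (x1 ord0); rewrite /= !hat_spec; done.
Qed.

Lemma e_surj (A : valg V) (b : fobj G A) : exists a : A, e a = b.
Proof.
have Hy := y1_free. case: (Hy (fobj G A) (fun _ => b)) => k [Hk _].
case: (Hfull k) => f Hf.
exists (f (x1 ord0)); rewrite /e.
have E : hom_eq f (hat (f (x1 ord0))) by apply: hat_uniq.
rewrite -(fmap_ext E (y1 ord0)) Hf; exact: Hk.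
Qed.

Definition etaGs n (F : valg V) (eta : 'I_n -> F) (Hf : is_free eta) :=
  constructive_indefinite_description _ (Hpf Hf).

Definition Phi (s : gen V) : gen W :=
  @Gen W (g_n s) (fobj G (g_F s)) (proj1_sig (etaGs (@g_free _ s)))
    (proj2_sig (etaGs (@g_free _ s))) (e (g_s s)).

Lemma psi_ex n (F : valg W) (eta : 'I_n -> F) (Hf : is_free eta) (z : F) :
  exists a : FV V 'I_n, relP z (e a) /\ relP (e a) z.
Proof.
have [eta' Hf'] := Hpf (FV_free V 'I_n).
case: (free_iso_pt Hf Hf' z) => z' [H1 H2].
by case: (e_surj z') => a Ea; exists a; rewrite Ea.
Qed.

Definition pick n (F : valg W) (eta : 'I_n -> F) (Hf : is_free eta) (z : F) : FV V 'I_n :=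
  proj1_sig (constructive_indefinite_description _ (psi_ex Hf z)).
Lemma pick_spec n (F : valg W) (eta : 'I_n -> F) (Hf : is_free eta) (z : F) :
  relP z (e (pick Hf z)) /\ relP (e (pick Hf z)) z.
Proof. exact: (proj2_sig (constructive_indefinite_description _ (psi_ex Hf z))). Qed.

Definition Psi (u : gen W) : gen V :=
  @Gen V (g_n u) (FV V 'I_(g_n u)) (@etaV V _) (FV_free V _) (pick (@g_free _ u) (g_s u)).

Definition PhiP (P : problem V) : problem W :=
  @Problem W (pb_n P) (fobj G (pb_F P)) (proj1_sig (etaGs (@pb_free _ P)))
    (proj2_sig (etaGs (@pb_free _ P))) (map (@e (pb_F P)) (pb_terms P)).

Definition PsiP (P : problem W) : problem V :=
  @Problem V (pb_n P) (FV V _) (@etaV V _) (FV_free V _) (map (pick (@pb_free _ P)) (pb_terms P)).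

Definition corr (P : problem V) (P' : problem W) :=
  List.Forall2 (fun t t' => relP (e t) t' /\ relP t' (e t)) (pb_terms P) (pb_terms P').

Lemma corr_PhiP P : corr P (PhiP P).
Proof.
rewrite /corr /=; elim: (pb_terms P) => [|t l IH] /=; constructor => //.
by split; apply: relP_refl.
Qed.

Lemma corr_PsiP P : corr (PsiP P) P.
Proof.
rewrite /corr /=; elim: (pb_terms P) => [|t l IH] /=; constructor => //.
by case: (pick_spec (@pb_free _ P) t) => H1 H2; split.
Qed.

Lemma corr_all P P' (B : valg W) (b : B) : corr P P' ->
  ((forall t, List.In t (pb_terms P) -> relP b (e t)) <->
   (forall t', List.In t' (pb_terms P') -> relP b t')).
Proof.
rewrite /corr; elim=> [|t t' l l' [H1 H2] _ IH] /=; first by split=> _ x [].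
split=> H x [<-|Hx].
- by apply: relP_trans H1; apply: H; left.
- by apply IH => // y Hy; apply: H; right.
- by apply: relP_trans H2; apply: H; left.
- by apply IH => // y Hy; apply: H; right.
Qed.

Lemma gen_le_refl U (s : gen U) : gen_le s s.
Proof. exact: relP_refl. Qed.

Lemma gen_le_trans U (s u w : gen U) : gen_le s u -> gen_le u w -> gen_le s w.
Proof. move=> H1 H2; exact: (relP_trans H2 H1). Qed.

Section Pair.
Variables (P : problem V) (P' : problem W).
Hypothesis HC : corr P P'.

Lemma solPhi s : is_solution P s -> is_solution P' (Phi s).
Proof.
move=> H; apply/(corr_all _ HC) => t Ht; apply/e_rel; exact: H.
Qed.

Lemma solPsi u : is_solution P' u -> is_solution P (Psi u).
Proof.
move=> H t Ht; apply/e_rel.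
case: (pick_spec (@g_free _ u) (g_s u)) => H1 H2.
apply: relP_trans H2 _; move: t Ht; apply/(corr_all _ HC); exact: H.
Qed.
End Pair.

Lemma lePhi s u : gen_le s u -> gen_le (Phi s) (Phi u).
Proof. by move/e_rel. Qed.
Lemma lePhiR s u : gen_le (Phi s) (Phi u) -> gen_le s u.
Proof. by move/e_rel. Qed.

Lemma lePsi a b : gen_le a b -> gen_le (Psi a) (Psi b).
Proof.
move=> H; rewrite /gen_le /=; apply: (proj2 (@e_rel (FV V 'I_(g_n b)) (FV V 'I_(g_n a)) _ _)).
case: (pick_spec (@g_free _ a) (g_s a)) => A1 A2.
case: (pick_spec (@g_free _ b) (g_s b)) => B1 B2.
exact: relP_trans B2 (relP_trans H A1).
Qed.

Lemma lePsiR a b : gen_le (Psi a) (Psi b) -> gen_le a b.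
Proof.
rewrite /gen_le /= => /(proj1 (@e_rel (FV V 'I_(g_n b)) (FV V 'I_(g_n a)) _ _)) H.
case: (pick_spec (@g_free _ a) (g_s a)) => A1 A2.
case: (pick_spec (@g_free _ b) (g_s b)) => B1 B2.
exact: relP_trans B1 (relP_trans H A2).
Qed.

Lemma PhiPsi u : gen_le (Phi (Psi u)) u.
Proof. by case: (pick_spec (@g_free _ u) (g_s u)). Qed.

Lemma PsiPhi s : gen_le (Psi (Phi s)) s.
Proof. by case: (pick_spec (@g_free _ (Phi s)) (g_s (Phi s))) => H _; apply/e_rel. Qed.

Lemma type_eq P P' : corr P P' -> problem_type P = problem_type P'.
Proof.
move=> HC.
have U1 := unitary_tr (@gen_le_refl W) (@gen_le_trans W) (solPhi HC) (solPsi HC) lePhi lePhiR PhiPsi.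
have U2 := unitary_tr (@gen_le_refl V) (@gen_le_trans V) (solPsi HC) (solPhi HC) lePsi lePsiR PsiPhi.
have F1' := finitary_tr (@gen_le_refl W) (@gen_le_trans W) (solPhi HC) (solPsi HC) lePhi lePhiR PhiPsi.
have F2 := finitary_tr (@gen_le_refl V) (@gen_le_trans V) (solPsi HC) (solPhi HC) lePsi lePsiR PsiPhi.
have I1 := infinitary_tr (@gen_le_refl W) (@gen_le_trans W) (solPhi HC) (solPsi HC) lePhi lePhiR PhiPsi.
have I2 := infinitary_tr (@gen_le_refl V) (@gen_le_trans V) (solPsi HC) (solPhi HC) lePsi lePsiR PsiPhi.
have HU : is_unitary P <-> is_unitary P' by split; [exact: U1 | exact: U2].
have HF : is_finitary P <-> is_finitary P' by split; [exact: F1' | exact: F2].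
have HI : is_infinitary P <-> is_infinitary P' by split; [exact: I1 | exact: I2].
clear U1 U2 F1' F2 I1 I2.
rewrite /problem_type.
destruct (excluded_middle_informative (is_unitary P)) as [a1|a1];
destruct (excluded_middle_informative (is_unitary P')) as [b1|b1];
destruct (excluded_middle_informative (is_finitary P)) as [a2|a2];
destruct (excluded_middle_informative (is_finitary P')) as [b2|b2];
destruct (excluded_middle_informative (is_infinitary P)) as [a3|a3];
destruct (excluded_middle_informative (is_infinitary P')) as [b3|b3];
try reflexivity; exfalso; tauto.
Qed.

End Eqv.


Theorem theorem3p8 (V W : variety) (k : kappa) :
  kappa_ge1 k -> equivalent_varieties V W -> ktype V k = ktype W k.
Proof.
move=> _ [G [Hfu Hfa _ Hpf]].
have Hadm1 : forall P : problem V, admissible k P <-> admissible k (PhiP Hpf P).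
  by move=> P; rewrite /admissible /= size_map.
have Hadm2 : forall P : problem W, admissible k P <-> admissible k (PsiP Hfu Hpf P).
  by move=> P; rewrite /admissible /= size_map.
have H : forall t, (exists P : problem V, admissible k P /\ problem_type P = t) <->
                   (exists P : problem W, admissible k P /\ problem_type P = t).
  move=> t; split.
  - move=> [P [HP <-]]; exists (PhiP Hpf P); split; first by apply/Hadm1.
    by symmetry; apply: (type_eq Hfu Hfa); apply: corr_PhiP.
  - move=> [P [HP <-]]; exists (PsiP Hfu Hpf P); split; first by apply/Hadm2.
    by apply: (type_eq Hfu Hfa); apply: corr_PsiP.
rewrite /ktype.
have H1 := H Nullary; have H2 := H Infinitary; have H3 := H Finitary.
destruct (excluded_middle_informative (exists P : problem V, admissible k P /\ problem_type P = Nullary));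
destruct (excluded_middle_informative (exists P : problem W, admissible k P /\ problem_type P = Nullary));
destruct (excluded_middle_informative (exists P : problem V, admissible k P /\ problem_type P = Infinitary));
destruct (excluded_middle_informative (exists P : problem W, admissible k P /\ problem_type P = Infinitary));
destruct (excluded_middle_informative (exists P : problem V, admissible k P /\ problem_type P = Finitary));
destruct (excluded_middle_informative (exists P : problem W, admissible k P /\ problem_type P = Finitary));
try reflexivity; exfalso; tauto.
Qed.
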